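(* Let $W$ be a layered wheel with rooted tree $T$, let $n\ge8$ be an integer and let $G$ be an $n$-vertex induced subgraph of $W$. Then either (i) there is some $u\in V(T)$ with at least $\frac n{16}$ and at most $\frac n4$ descendants in $V(G)$, such that every node $v\in V(T)$ in the same layer as $u$ has at most $\frac n4$ descendants in $V(G)$; or (ii) there is some $u\in V(T)$ and a child $u^+$ of $u$ such that the total number of descendants in $V(G)$ of all children of $u$ that lie strictly to the right of the leftmost child of $u$ and strictly to the left of $u^+$ is at least $\frac n{16}$ and at most $\frac n8$.
   Context: A layered wheel is a countably infinite graph $W$ on the same vertex set as a countably infinite, locally finite rooted tree $T$ embedded in the plane, such that: (1) for every natural number $n$, the set $L_n$ (layer) of nodes at distance $n$ from the root induces in $W$ a finite path visiting $L_n$ in the left-to-right order of the embedding (this order also orders the children of each node from left to right); edges inside layers form the set $E_L$; (2) every edge not in $E_L$ joins two nodes in ancestor–descendant relation in $T$; (3) there is a finite bound on the length of paths in $T$ consisting only of degree-$2$ nodes of $T$. A node is its own ancestor and descendant. *)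

(* Defs.v *)
From mathcomp Require Import all_boot.
Set Implicit Arguments. Unset Strict Implicit. Unset Printing Implicit Defensive.

(* A countably infinite, locally finite rooted tree embedded in the plane,
   given up to isomorphism by its layers: layer [k] has [lsize k] nodes,
   numbered 0,...,lsize k - 1 from left to right; node (k, i) is the pair
   (layer, index).  For a node i of layer k+1, [par k i] is the index of its
   parent in layer k. *)
Record ptree := PTree { lsize : nat -> nat; par : nat -> nat -> nat }.

Definition vertex := (nat * nat)%type.

Definition valid (T : ptree) (v : vertex) : bool := v.2 < lsize T v.1.

(* Well-formedness: a single root, every layer nonempty (the tree is infinite;
   layers are finite, i.e. the tree is locally finite), parents lie in the
   previous layer, and the plane embedding: the left-to-right order of a layer
   is compatible with the left-to-right order of the parents. *)
Definition is_ptree (T : ptree) : Prop :=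
  [/\ lsize T 0 = 1,
      (forall k, 0 < lsize T k),
      (forall k i, i < lsize T k.+1 -> par T k i < lsize T k)
    & (forall k i j, i <= j -> j < lsize T k.+1 -> par T k i <= par T k j)].

Fixpoint up (T : ptree) (k i d : nat) {struct d} : nat :=
  match d with
  | 0 => i
  | d'.+1 => match k with 0 => i | k'.+1 => up T k' (par T k' i) d' end
  end.

(* u is an ancestor of v (a node is its own ancestor). *)
Definition anc (T : ptree) (u v : vertex) : bool :=
  (u.1 <= v.1) && (up T v.1 v.2 (v.1 - u.1) == u.2).

Definition tadj (T : ptree) (u v : vertex) : bool :=
  valid T u && valid T v &&
  (((u.1 == v.1.+1) && (par T v.1 u.2 == v.2)) ||
   ((v.1 == u.1.+1) && (par T u.1 v.2 == u.2))).

Definition tdeg (T : ptree) (v : vertex) : nat :=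
  count (fun j => par T v.1 j == v.2) (iota 0 (lsize T v.1.+1)) + (v.1 != 0).

Definition deg2_path (T : ptree) (p : seq vertex) : bool :=
  uniq p && all (valid T) p && all (fun v => tdeg T v == 2) p &&
  (if p is x :: q then path (tadj T) x q else true).

Definition layered_wheel (T : ptree) (W : vertex -> vertex -> Prop) : Prop :=
  is_ptree T /\
  (forall u v, W u v -> valid T u /\ valid T v) /\
  (forall u v, W u v -> W v u) /\
  (forall u, ~ W u u) /\
  (forall k i j, i < lsize T k -> j < lsize T k ->
      (W (k, i) (k, j) <-> (i.+1 = j \/ j.+1 = i))) /\
  (forall u v, W u v -> u.1 <> v.1 -> anc T u v \/ anc T v u) /\
  (exists B, forall p, deg2_path T p -> size p <= B).

Definition ndesc (T : ptree) (s : seq vertex) (u : vertex) : nat :=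
  count (anc T u) s.

(* Main.v *)
Require Import Defs.
From mathcomp Require Import all_boot zify.

Lemma up_succ T d m i : d < m -> up T m i d.+1 = par T (m - d.+1) (up T m i d).
Proof.
elim: d m i => [|d IH] [|m] i //= H.
  by rewrite subn1.
transitivity (up T m (par T m i) d.+1); first by [].
rewrite IH; last by lia.
by rewrite subSS.
Qed.

Lemma up_valid T d m i : is_ptree T -> i < lsize T m -> d <= m -> up T m i d < lsize T (m - d).
Proof.
move=> [h0 h1 h2 h3].
elim: d m i => [|d IH] [|m] i //=.
move=> Hi Hd; rewrite subSS; apply: IH => //; apply: h2 => //.
Qed.

Lemma child_exists T k j v : is_ptree T -> valid T v -> anc T (k,j) v -> v != (k,j) ->
  exists i, i < lsize T k.+1 /\ par T k i = j /\ anc T (k.+1,i) v.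
Proof.
move=> HT; case: v => [a b] /= Hv /andP [/= Hka /eqP Hup] Hne.
have Hlt : k < a.
  rewrite ltn_neqAle Hka andbT; apply/eqP => E; subst a.
  move: Hup; rewrite subnn /= => E; subst b; by rewrite eqxx in Hne.
exists (up T a b (a - k.+1)); split; [|split].
- have H := @up_valid T (a - k.+1) a b HT Hv.
  have E : a - (a - k.+1) = k.+1 by lia.
  rewrite E in H; apply: H; lia.
- have E1 : a - (a - k.+1).+1 = k by lia.
  have := @up_succ T (a - k.+1) a b; rewrite E1 => <-; last by lia.
  have E : (a - k.+1).+1 = a - k by lia.
  by rewrite E.
- by rewrite /anc /= Hlt eqxx.
Qed.

Lemma count_sum (T0 : Type) (a : pred T0) s : count a s = \sum_(v <- s) (a v : nat).
Proof. by elim: s => [|x s IH]; rewrite ?big_nil ?big_cons //= IH. Qed.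

Lemma ndesc_le T s k j : is_ptree T -> uniq s -> all (valid T) s ->
  ndesc T s (k,j) <= 1 + \sum_(0 <= i < lsize T k.+1 | par T k i == j) ndesc T s (k.+1,i).
Proof.
move=> HT Hu Hv.
have H1 : count (pred1 (k,j)) s <= 1 by rewrite count_uniq_mem //; case: (_ \in _).
apply: (leq_trans _ (leq_add H1 (leqnn _))).
rewrite /ndesc.
under eq_bigr do rewrite count_sum.
rewrite exchange_big /= !count_sum -big_split /=.
rewrite big_seq_cond [X in _ <= X]big_seq_cond; apply: leq_sum => v /andP [Hvs _].
case Ha: (anc T (k,j) v) => //=.
case: (eqVneq v (k,j)) => [E|Hne]; first by rewrite add1n.
have Hvv : valid T v by move/allP: Hv; apply.
have [i [Hi [Hp Hai]]] := @child_exists T k j v HT Hvv Ha Hne.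
rewrite add0n.
rewrite big_mkcond (bigD1_seq i) /=; last by rewrite iota_uniq.
  by rewrite Hp eqxx Hai add1n.
by rewrite mem_index_iota.
Qed.

Lemma ndesc_root T s : is_ptree T -> all (valid T) s -> ndesc T s (0,0) = size s.
Proof.
move=> HT Hv; apply/eqP; rewrite /ndesc -all_count.
apply/allP => v Hvs; have := allP Hv v Hvs.
case: v {Hvs} => a b Hab.
rewrite /anc /= subn0 /=.
have := @up_valid T a a b HT Hab (leqnn a); rewrite subnn.
case: HT => -> _ _ _; by rewrite ltnS leqn0.
Qed.

Lemma ndesc_deep T s k j : (forall v, v \in s -> v.1 < k) -> ndesc T s (k,j) = 0.
Proof.
move=> H; apply/eqP; rewrite /ndesc -leqn0 leqNgt -has_count.
apply/hasPn => v Hv; rewrite /anc /=; have := H v Hv; case: leqP => //=.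
Qed.

Theorem lemma5p1 (T : ptree) (W : vertex -> vertex -> Prop) (n : nat)
    (s : seq vertex) :
  layered_wheel T W -> 8 <= n ->
  uniq s -> all (valid T) s -> size s = n ->
  (exists u : vertex, valid T u /\
     n <= 16 * ndesc T s u /\ 4 * ndesc T s u <= n /\
     (forall j, j < lsize T u.1 -> 4 * ndesc T s (u.1, j) <= n))
  \/
  (exists (k j c c0 : nat),
     j < lsize T k /\
     c < lsize T k.+1 /\ par T k c = j /\
     c0 < lsize T k.+1 /\ par T k c0 = j /\
     (forall i, i < c0 -> par T k i <> j) /\
     n <= 16 * (\sum_(c0.+1 <= i < c | par T k i == j) ndesc T s (k.+1, i)) /\
     8 * (\sum_(c0.+1 <= i < c | par T k i == j) ndesc T s (k.+1, i)) <= n).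
Proof.
move=> [HT _] Hn Hu Hv Hs.
have HT' := HT; case: HT' => Hl0 Hlpos Hpar Hmono.
set K := (\sum_(v <- s) v.1).+1.
have HK : forall v, v \in s -> v.1 < K.
  move=> v Hvs; rewrite /K ltnS (bigD1_seq v) //=; lia.
pose P k := has (fun j => n < 4 * ndesc T s (k,j)) (iota 0 (lsize T k)).
have P0 : exists k, P k.
  exists 0; apply/hasP; exists 0; first by rewrite mem_iota Hl0.
  rewrite ndesc_root // Hs; lia.
have Pb : forall k, P k -> k <= K.
  move=> k /hasP [j _ /= H]; rewrite leqNgt; apply/negP => HKk; move: H.
  rewrite ndesc_deep; first by lia.
  move=> v /HK H; exact: ltn_trans H HKk.
case: (ex_maxnP P0 Pb) => k /hasP [j]; rewrite mem_iota add0n => /= Hj Hbig Hmax.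
have Hsmall : forall i, i < lsize T k.+1 -> 4 * ndesc T s (k.+1, i) <= n.
  move=> i Hi; rewrite leqNgt; apply/negP => Hc.
  have : P k.+1 by apply/hasP; exists i => //; rewrite mem_iota.
  by move/Hmax; rewrite ltnn.
set L := lsize T k.+1.
set F := fun i => ndesc T s (k.+1, i).
case: (boolP (has (fun i => (par T k i == j) && (n <= 16 * F i)) (iota 0 L))).
  move=> /hasP [i]; rewrite mem_iota add0n => Hi /andP [_ Hbi].
  left; exists (k.+1, i); split => //; split => //; split => //.
  exact: Hsmall.
move=> /hasPn Hch.
have Hchild : forall i, i < L -> par T k i = j -> 16 * F i < n.
  move=> i Hi Hp; have : i \in iota 0 L by rewrite mem_iota; apply/andP; split; lia.
  move/Hch; rewrite Hp eqxx /= -ltnNge; done.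
right.
have Hle := @ndesc_le T s k j HT Hu Hv.
set Tot := \sum_(0 <= i < L | par T k i == j) ndesc T s (k.+1, i) in Hle.
have exC : exists i, (i < L) && (par T k i == j).
  case: (boolP (has (fun i => par T k i == j) (iota 0 L))).
    move=> /hasP [i]; rewrite mem_iota add0n => /andP [_ Hi] Hp; exists i; by rewrite Hi Hp.
  move=> Hn0; have : Tot = 0 by rewrite /Tot big_hasC // /index_iota subn0.
  lia.
have Lb : forall i, (i < L) && (par T k i == j) -> i <= L by move=> i /andP [/ltnW].
case: (ex_minnP exC) => c0 /andP [Hc0 /eqP Hp0] Hmin.
case: (ex_maxnP exC Lb) => cl /andP [Hcl /eqP Hpl] Hmaxl.
have Hc0l : c0 <= cl by apply: Hmin; rewrite Hcl Hpl eqxx.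
pose G i := if par T k i == j then F i else 0.
have TotG : Tot = \sum_(0 <= i < L) G i by rewrite /Tot big_mkcond.
have Gout : forall i, i < L -> (i < c0) || (cl < i) -> G i = 0.
  move=> i Hi /orP [H|H]; rewrite /G; case: eqP => // Hp.
    have := Hmin i; rewrite Hi Hp eqxx /= => /(_ isT); lia.
  have := Hmaxl i; rewrite Hi Hp eqxx /= => /(_ isT); lia.
pose S c := \sum_(c0.+1 <= i < c | par T k i == j) F i.
have SG : forall c, S c = \sum_(c0.+1 <= i < c) G i by move=> c; rewrite /S big_mkcond.
have Gsmall : forall i, i < L -> 16 * G i < n.
  move=> i Hi; rewrite /G; case: eqP => Hp; [exact: Hchild | lia].
have Hz1 : \sum_(0 <= i < c0) G i = 0.
  rewrite big_nat big1 // => i /andP [_ Hi]; apply: Gout; lia.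
have Hz2 : \sum_(cl.+1 <= i < L) G i = 0.
  rewrite big_nat big1 // => i /andP [Hi1 Hi]; apply: Gout; lia.
have GF0 : G c0 = F c0 by rewrite /G Hp0 eqxx.
have GFl : G cl = F cl by rewrite /G Hpl eqxx.
have Srec : forall c, c0.+1 <= c -> S c.+1 = S c + G c.
  by move=> c Hc; rewrite !SG big_nat_recr.
have Tsplit : Tot = \sum_(0 <= i < c0) G i + G c0 + S cl.+1 .
  rewrite TotG (big_cat_nat (n := c0)) //=; last lia.
  rewrite (big_cat_nat (n := cl.+1) (m := c0)) //=; last lia.
  rewrite Hz2 addn0 -addnA; congr (_ + _); rewrite big_ltn ?SG //; lia.
rewrite Hz1 add0n GF0 in Tsplit.
have HF0 := Hchild c0 Hc0 Hp0.
have HFl := Hchild cl Hcl Hpl.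
have Hc0lt : c0 < cl.
  rewrite ltn_neqAle Hc0l andbT; apply/eqP => E; subst cl.
  move: Tsplit; rewrite /S big_geq //; lia.
have Scl : S cl.+1 = S cl + F cl by rewrite Srec // GFl.
have HSl : n <= 16 * S cl by lia.
have exQ : exists c, (c0.+1 <= c) && (c <= cl) && (n <= 16 * S c).
  by exists cl; rewrite HSl Hc0lt leqnn.
case: (ex_minnP exQ) => c /andP [/andP [Hc1 Hc2] Hc3] Hcmin.
have Hcne : c0.+1 < c.
  rewrite ltn_neqAle Hc1 andbT; apply/eqP => E; subst c.
  move: Hc3; rewrite /S big_geq //; lia.
case: c Hc1 Hc2 Hc3 Hcmin Hcne => [|c'] // Hc1 Hc2 Hc3 Hcmin Hcne.
have Hc' : 16 * S c' < n.
  rewrite ltnNge; apply/negP => H.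
  have := Hcmin c'; rewrite H andbT /= => /(_ _).
  have : (c0.+1 <= c') && (c' <= cl) by apply/andP; split; lia.
  by move=> -> /(_ isT); lia.
have HSc := Srec c' ltac:(lia).
have HGc := Gsmall c' ltac:(lia).
have Hpc : par T k c'.+1 = j.
  apply/eqP; rewrite eqn_leq; apply/andP; split.
    rewrite -Hpl; apply: Hmono => //.
  rewrite -{1}Hp0; apply: Hmono; lia.
exists k, j, c'.+1, c0; split => //; split; first lia.
split => //; split => //; split => //; split.
  move=> i Hi Hp; have := Hmin i; rewrite Hp eqxx andbT => /(_ ltac:(lia)); lia.
have -> : \sum_(c0.+1 <= i < c'.+1 | par T k i == j) ndesc T s (k.+1, i) = S c'.+1 by []. split => //; lia.
Qed.
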